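(* For every integer $k\ge 1$, let $G_k$ be the graph consisting of a path $u_1u_2\cdots u_{2^k-1}$ together with an independent set $\{v_0,\dots,v_{k-1}\}$ disjoint from the path, where $v_i$ is adjacent to $u_j$ if and only if $i$ is the largest integer such that $2^i$ divides $j$ (and there are no other edges). Then $G_k$ has $2^k+k-1$ vertices, is $\mathcal{O}_2$-free, does not contain $K_{3,3}$ as a subgraph, and has treewidth exactly $k$.
   Context: All graphs are finite and simple. Two vertex-disjoint subgraphs are independent if there is no edge between them. A graph is $\mathcal{O}_2$-free if it does not contain two vertex-disjoint cycles with no edge between them; equivalently, it has no induced subgraph that is a disjoint union of two cycles. *)

(* Defs.v *)
From mathcomp Require Import all_boot.
Set Implicit Arguments.
Unset Strict Implicit.
Unset Printing Implicit Defensive.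

Definition is_cycle (T : finType) (e : rel T) (s : seq T) : bool :=
  [&& 2 < size s, uniq s & cycle e s].

Definition O2_free (T : finType) (e : rel T) : Prop :=
  ~ exists (c1 c2 : seq T),
      [/\ is_cycle e c1, is_cycle e c2,
          (forall x, x \in c1 -> x \notin c2) &
          (forall x y, x \in c1 -> y \in c2 -> ~~ e x y)].

Definition has_K33_subgraph (T : finType) (e : rel T) : Prop :=
  exists f : ('I_3 + 'I_3)%type -> T,
    injective f /\ forall i j : 'I_3, e (f (inl i)) (f (inr j)).

Definition is_tree (I : finType) (t : rel I) : Prop :=
  [/\ 0 < #|I|, symmetric t, irreflexive t,
      (forall i j, connect t i j) &
      (forall s : seq I, ~~ is_cycle t s)].

Definition tree_decomposition (T : finType) (e : rel T)
    (I : finType) (t : rel I) (B : I -> {set T}) : Prop :=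
  [/\ is_tree t,
      (forall x : T, exists i, x \in B i),
      (forall x y : T, e x y -> exists i, (x \in B i) && (y \in B i)) &
      (forall x : T, forall i j, x \in B i -> x \in B j ->
          connect [rel a b | [&& t a b, x \in B a & x \in B b]] i j)].

Definition td_width (T I : finType) (B : I -> {set T}) : nat :=
  (\max_(i in I) #|B i|) - 1.

Definition treewidth_eq (T : finType) (e : rel T) (w : nat) : Prop :=
  (exists (I : finType) (t : rel I) (B : I -> {set T}),
      tree_decomposition e t B /\ td_width B = w) /\
  (forall (I : finType) (t : rel I) (B : I -> {set T}),
      tree_decomposition e t B -> w <= td_width B).

(* The graph G_k: path vertices inl a stands for u_(a+1), a < 2^k - 1;
   inr i stands for v_i, i < k. *)
Definition Gk_vertex (k : nat) : finType := ('I_(2 ^ k - 1) + 'I_k)%type.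

Definition Gk_adj (k : nat) : rel (Gk_vertex k) :=
  fun x y =>
    match x, y with
    | inl a, inl b => (a.+1 == b :> nat) || (b.+1 == a :> nat)
    | inl a, inr i => logn 2 a.+1 == i
    | inr i, inl a => logn 2 a.+1 == i
    | inr _, inr _ => false
    end.
Arguments Gk_adj k x y : clear implicits.

(* Main.v *)
Require Import Defs.
From mathcomp Require Import all_boot zify.
Set Implicit Arguments. Unset Strict Implicit. Unset Printing Implicit Defensive.

Section Tree.
Variables (I : finType) (t : rel I).
Hypotheses (tsym : symmetric t) (tirr : irreflexive t)
  (tacyc : forall s, ~~ is_cycle t s).

Definition restr (A : {set I}) : rel I := [rel a b | [&& t a b, a \in A & b \in A]].
Definition connd (A : {set I}) :=
  forall a b, a \in A -> b \in A -> connect (restr A) a b.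

Lemma restr_sub (A : {set I}) : subrel (restr A) t.
Proof. by move=> a b /and3P[]. Qed.

Lemma path_restr_sub (A : {set I}) a s : a \in A -> path (restr A) a s -> {subset a :: s <= A}.
Proof.
elim: s a => [|b s IH] a aA /=.
  by move=> _ x; rewrite inE => /eqP->.
case/andP=> /and3P[_ _ bA] ps x; rewrite inE => /orP[/eqP->//|].
exact: IH.
Qed.

Lemma path_restrW (A C : {set I}) a s : path (restr A) a s -> {subset a :: s <= C} ->
  path (restr C) a s.
Proof.
elim: s a => [|b s IH] a //= /andP[/and3P[tab _ _] ps] sub.
rewrite /= -andbA tab !sub ?inE ?eqxx ?orbT //=.
apply: IH => // x xin; apply: sub; by rewrite inE xin orbT.
Qed.

Lemma path_suffix (e : rel I) x p s1 q s2 : x :: p = s1 ++ q :: s2 ->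
  path e x p -> path e q s2.
Proof.
case: s1 => [|y s1] /= [-> ->] //.
by rewrite cat_path /= => /andP[_ /andP[_ ->]].
Qed.

Lemma leaf_aux (S : {set I}) a : a \in S -> forall n s, #|S| - size s <= n ->
  uniq (a :: s) -> path (restr S) a s ->
  exists l, l \in S /\ exists p, forall q, q \in S -> t l q -> q = p.
Proof.
move=> aS; elim=> [|n IH] s hn us ps.
  have sub := path_restr_sub aS ps.
  have : #|a :: s| <= #|S| by apply: subset_leq_card; apply/subsetP.
  rewrite (card_uniqP us) /= => h2. lia.
case: (boolP [exists q, [&& q \in S, t (last a s) q & q \notin a :: s]]).
  case/existsP=> q /and3P[qS tq qn].
  apply: (IH (rcons s q)).
  - rewrite size_rcons subnS; move: hn.
    have sub := path_restr_sub aS ps.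
    have : #|q :: a :: s| <= #|S|.
      apply: subset_leq_card; apply/subsetP=> x; rewrite inE => /orP[/eqP->//|].
      exact: sub.
    have u2 : uniq (q :: a :: s) by rewrite cons_uniq qn us.
    rewrite (card_uniqP u2) /=; lia.
  - by rewrite -rcons_cons rcons_uniq qn.
  - rewrite rcons_path ps /restr /= tq qS andbT.
    by apply: (path_restr_sub aS ps); rewrite mem_last.
rewrite negb_exists => /forallP nq.
have sub := path_restr_sub aS ps.
case/lastP: s hn us ps nq sub => [|s' l] hn us ps nq sub.
  exists a; split => //; exists a => q qS taq.
  by have := nq q; rewrite qS taq /= inE negbK => /eqP.
exists l; split; first by apply: sub; rewrite inE mem_rcons inE eqxx orbT.
exists (last a s') => q qS tlq.
have := nq q; rewrite qS last_rcons tlq /= negbK => qin.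
have ql : q != l by apply/eqP=> ql; move: tlq; rewrite ql tirr.
move: qin; rewrite -rcons_cons mem_rcons inE (negbTE ql) /= => qin.
have [s1 [s2 E]] : exists s1 s2, a :: s' = s1 ++ q :: s2.
  by case/splitPr: qin => s1 s2; exists s1, s2.
case: (eqVneq q (last a s')) => // hq; exfalso.
have E2 : a :: rcons s' l = s1 ++ q :: rcons s2 l.
  by rewrite -rcons_cons E rcons_cat.
have s2n : s2 != [::].
  apply/eqP=> s20; move: hq; rewrite s20 in E.
  have <- : last a (a :: s') = last a s' by [].
  by rewrite E cats1 last_rcons eqxx.
move/negP: (tacyc (q :: rcons s2 l)); apply.
rewrite /is_cycle /= size_rcons; apply/and3P; split.
- by case: (s2) s2n.
- by move: us; rewrite E2 cat_uniq => /and3P[_ _].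
- rewrite rcons_path last_rcons tlq andbT.
  apply: (path_suffix E2); exact: (sub_path (@restr_sub S) ps).
Qed.

Lemma remove_leaf (S T : {set I}) l p : T \subset S ->
  (forall q, q \in S -> t l q -> q = p) -> connd T ->
  connd (T :\ l).
Proof.
move=> TS hl cT a b; rewrite !inE => /andP[al aT] /andP[bl bT].
have /connectP[s ps eb] := cT a b aT bT; subst b.
move: bl; case: (shortenP ps) => s' ps' us' _ bl.
have sub := path_restr_sub aT ps'.
apply/connectP; exists s' => //; apply: (path_restrW ps') => x xin.
rewrite !inE (sub x xin) andbT.
apply/eqP=> xl; move: xin; rewrite {}xl inE eq_sym (negbTE al) /= => lin.
case/splitPr: lin us' ps' bl sub => s1 s2 us' ps' bl sub.
case: s2 us' ps' bl sub => [|z s2] us' ps' bl sub.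
  by move: bl; rewrite cats1 last_rcons eqxx.
move: ps'; rewrite cat_path => /andP[_]; rewrite /= /restr /= => /andP[/and3P[t1 _ _] /andP[/and3P[t2 _ zT] _]].
have y1 : last a s1 = p.
  apply: hl; last by rewrite tsym.
  by apply: (subsetP TS); apply: sub; rewrite -cat_cons mem_cat mem_last.
have z1 : z = p by apply: hl => //; apply: (subsetP TS).
move: us'; rewrite -cat_cons cat_uniq => /and3P[_ /hasPn H _].
have := H z; rewrite !inE eqxx orbT /= => /(_ isT).
by rewrite z1 -y1 -in_cons mem_last.
Qed.

Lemma leaf_nb (S T : {set I}) l p c : T \subset S ->
  (forall q, q \in S -> t l q -> q = p) -> connd T ->
  l \in T -> c \in T -> c != l -> p \in T /\ p != l.
Proof.
move=> TS hl cT lT cT1 cl.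
have /connectP[[|q s] ps ec] := cT l c lT cT1.
  by move: cl; rewrite ec eqxx.
move: ps => /= /andP[/and3P[tlq _ qT] _].
have -> : p = q by rewrite (hl q) // (subsetP TS).
split => //; apply/eqP=> ql; by move: tlq; rewrite ql tirr.
Qed.

Lemma helly (J : finType) (j0 : J) : forall n (S : {set I}), #|S| <= n ->
  connd S -> forall T : J -> {set I}, (forall j, T j \subset S) ->
  (forall j, connd (T j)) -> (forall j1 j2, T j1 :&: T j2 != set0) ->
  exists i, forall j, i \in T j.
Proof.
elim=> [|n IH] S hS cS T TS cT Tint.
  have /set0Pn[z] := Tint j0 j0; rewrite inE => /andP[zT _].
  have := subsetP (TS j0) z zT; move: hS; rewrite leqn0 => /eqP/card0_eq ->.
  by rewrite inE.
have /set0Pn[a] := Tint j0 j0; rewrite inE => /andP[aT _].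
have aS := subsetP (TS j0) a aT.
case: (leqP #|S| 1) => [h1|h2].
  exists a => j; have /set0Pn[z] := Tint j j; rewrite inE => /andP[zT _].
  have zS := subsetP (TS j) z zT.
  have := (card_le1P h1) a aS z; rewrite zS => /esym /eqP <-.
  done.
have [l [lS [p hl]]] := @leaf_aux S a aS #|S| [::] (leq_subr _ _) isT isT.
case: (boolP [exists j, T j \subset [set l]]).
  case/existsP=> j /subsetP Tl; exists l => j'.
  have /set0Pn[z] := Tint j j'; rewrite inE => /andP[zT zT'].
  by have := Tl z zT; rewrite inE => /eqP <-.
rewrite negb_exists => /forallP Tnl.
have Tc j : exists c, (c \in T j) && (c != l).
  have := Tnl j; case/subsetPn=> c cTj; rewrite inE => cl; by exists c; rewrite cTj.
have [i Hi] : exists i, forall j, i \in T j :\ l.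
  apply: (IH (S :\ l)).
  - move: hS; rewrite (cardsD1 l S) lS /= add1n ltnS //.
  - exact: (@remove_leaf S S l p).
  - by move=> j; apply: setSD.
  - by move=> j; apply: (@remove_leaf S (T j) l p).
  - move=> j1 j2; have /set0Pn[z] := Tint j1 j2; rewrite inE => /andP[z1 z2].
    case: (eqVneq z l) => [zl|zl].
      move: z1 z2; rewrite zl => z1 z2.
      have [c1 /andP[c1T c1l]] := Tc j1; have [c2 /andP[c2T c2l]] := Tc j2.
      have [p1 pl] := @leaf_nb S (T j1) l p c1 (TS j1) hl (cT j1) z1 c1T c1l.
      have [p2 _] := @leaf_nb S (T j2) l p c2 (TS j2) hl (cT j2) z2 c2T c2l.
      by apply/set0Pn; exists p; rewrite !inE pl p1 p2.
    by apply/set0Pn; exists z; rewrite !inE zl z1 z2.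
by exists i => j; have := Hi j; rewrite inE => /andP[].
Qed.
End Tree.

Section Bramble.
Variables (V I : finType) (e : rel V) (t : rel I) (B : I -> {set V}).
Hypothesis TD : tree_decomposition e t B.

Definition gconn (X : {set V}) := forall x y, x \in X -> y \in X ->
  connect [rel a b | [&& e a b, a \in X & b \in X]] x y.

Lemma bramble (J : finType) (j0 : J) (X : J -> {set V}) :
  (forall j, gconn (X j)) -> (forall j, X j != set0) ->
  (forall j1 j2, j1 != j2 -> exists x y, [/\ x \in X j1, y \in X j2 & e x y]) ->
  exists i, forall j, B i :&: X j != set0.
Proof.
case: TD => [[_ tsym tirr tconn tacyc] Bcov Bedge Bsub] Xc Xn Xt.
pose T j := [set i | B i :&: X j != set0].
have vsub j x a b : x \in X j -> x \in B a -> x \in B b -> connect (restr t (T j)) a b.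
  move=> xX xa xb; apply: connect_sub (Bsub x a b xa xb) => c d /= /and3P[tcd xc xd].
  apply: connect1; rewrite /restr /=; apply/and3P; split => //;
    rewrite /T inE; apply/set0Pn; exists x; by rewrite inE ?xc ?xd xX.
have [i Hi] : exists i, forall j, i \in T j.
  apply: (@helly I t tsym tirr tacyc J j0 #|[set: I]| [set: I]) => //.
  - move=> a b _ _; apply: connect_sub (tconn a b) => c d tcd.
    by apply: connect1; rewrite /restr /= tcd !inE.
  - move=> j a b; rewrite !inE => /set0Pn[x]; rewrite inE => /andP[xa xX].
    move=> /set0Pn[y]; rewrite inE => /andP[yb yX].
    have /connectP[s ps ey] := Xc j x y xX yX.
    elim: s x a xa xX ps ey {yX} => [|z s IH] x a xa xX /= ps ey.
      by subst y; apply: vsub xX xa yb.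
    move: ps => /andP[/and3P[exz _ zX] ps].
    have [c /andP[xc zc]] := Bedge x z exz.
    apply: connect_trans (vsub j x a c xX xa xc) _.
    exact: IH zc zX ps ey.
  - move=> j1 j2; case: (eqVneq j1 j2) => [<-|ne].
      have /set0Pn[x xX] := Xn j1; have [i xi] := Bcov x.
      by apply/set0Pn; exists i; rewrite /T !inE andbb; apply/set0Pn; exists x; rewrite inE xi.
    have [x [y [xX yY exy]]] := Xt j1 j2 ne.
    have [i /andP[xi yi]] := Bedge x y exy.
    by apply/set0Pn; exists i; rewrite /T !inE; apply/andP; split; apply/set0Pn;
      [exists x | exists y]; rewrite inE ?xi ?yi.
by exists i => j; have := Hi j; rewrite /T inE.
Qed.

Lemma bramble_width (J : finType) (j0 : J) (X : J -> {set V}) :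
  (forall j, gconn (X j)) -> (forall j, X j != set0) ->
  (forall j1 j2, j1 != j2 -> exists x y, [/\ x \in X j1, y \in X j2 & e x y]) ->
  (forall j1 j2 x, x \in X j1 -> x \in X j2 -> j1 = j2) ->
  #|J| - 1 <= td_width B.
Proof.
move=> Xc Xn Xt Xd.
have [i Hi] := bramble j0 Xc Xn Xt.
have f j : {x | x \in B i :&: X j}.
  by apply: sigW; have /set0Pn[x xin] := Hi j; exists x.
have finj : injective (fun j => sval (f j)).
  move=> j1 j2 eq; apply: (Xd j1 j2 (sval (f j1))).
    by have := svalP (f j1); rewrite inE => /andP[].
  by rewrite eq; have := svalP (f j2); rewrite inE => /andP[].
have : #|J| <= #|B i|.
  rewrite -cardsT -(card_imset [set: J] finj).
  apply: subset_leq_card; apply/subsetP => x /imsetP[j _ ->].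
  by have := svalP (f j); rewrite inE => /andP[].
move=> h; rewrite /td_width; apply: leq_sub2r.
apply: leq_trans h _; exact: (@leq_bigmax_cond _ _ _ i).
Qed.
End Bramble.

Lemma cyc_nb_gen (T : finType) (e : rel T) (c : seq T) x : symmetric e ->
  is_cycle e c -> x \in c ->
  exists y z, [/\ y \in c, z \in c, y != z, e x y & e x z].
Proof.
move=> esym /and3P[sc uc cc] xc; case: (rot_to xc) => n s E.
have : 2 < size (x :: s) by rewrite -E size_rot.
have : uniq (x :: s) by rewrite -E rot_uniq.
have : cycle e (x :: s) by rewrite -E rot_cycle.
have mem y : y \in s -> y \in c by move=> ys; rewrite -(mem_rot n) E inE ys orbT.
case: s E mem => [|y s] // E mem.
case/lastP: s E mem => [|r z] // E mem.
move=> /= /andP[exy]; rewrite rcons_path last_rcons => /andP[_ ezx].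
rewrite /= mem_rcons inE negb_or => /andP[_ /andP[/andP[yz _] _]] _.
exists y, z; split => //.
- by apply: mem; rewrite inE eqxx.
- by apply: mem; rewrite inE mem_rcons inE eqxx orbT.
- by rewrite esym.
Qed.

Section Interval.
Variable M : nat.
Definition prel : rel 'I_M := fun p q => (p.+1 == q :> nat) || (q.+1 == p :> nat).

Lemma prel_sym : symmetric prel.
Proof. by move=> p q; rewrite /prel orbC. Qed.

Lemma prel_acyc s : ~~ is_cycle prel s.
Proof.
apply/negP => cy.
have [x0 x0s] : exists x, x \in s.
  by case/and3P: cy; case: (s) => [|x s'] //; exists x; rewrite inE eqxx.
case: (arg_maxnP (fun y : 'I_M => val y) (x0s : (mem s) x0)) => m ms mmax.
have [y [z [ys zs yz my mz]]] := cyc_nb_gen prel_sym cy ms.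
have hy : y <= m := mmax y ys; have hz : z <= m := mmax z zs.
move: my mz; rewrite /prel => /orP[] /eqP h1 /orP[] /eqP h2; try lia.
have : (y : nat) = z by lia.
by move/val_inj => eyz; rewrite eyz eqxx in yz.
Qed.

Lemma prel_conn (A : pred nat) (R : rel 'I_M) :
  (forall p q : 'I_M, prel p q -> A p -> A q -> R p q) ->
  (forall a b c, a <= b <= c -> A a -> A c -> A b) ->
  forall p q : 'I_M, A p -> A q -> connect R p q.
Proof.
move=> HR Hconv.
have H n : forall p q : 'I_M, q = p + n :> nat -> A p -> A q ->
    connect R p q /\ connect R q p.
  elim: n => [|n IH] p q eq Ap Aq.
    by have -> : q = p by apply: val_inj => /=; rewrite eq addn0.
  have lt : p + n < M by have := ltn_ord q; lia.
  pose q' := Ordinal lt.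
  have Aq' : A q' by apply: (Hconv p _ q) => //=; apply/andP; split; lia.
  have [c1 c2] := IH p q' erefl Ap Aq'.
  have r1 : R q' q by apply: HR => //; rewrite /prel /= eq addnS eqxx.
  have r2 : R q q' by apply: HR => //; rewrite /prel /= eq addnS eqxx orbT.
  by split; [apply: connect_trans c1 (connect1 r1) | apply: connect_trans (connect1 r2) c2].
move=> p q Ap Aq; case: (leqP p q) => h.
  by case: (H (q - p) p q (esym (subnKC h)) Ap Aq).
by case: (H (p - q) q p (esym (subnKC (ltnW h))) Aq Ap).
Qed.

Variables (V : finType) (e : rel V) (lo hi : V -> nat).
Definition ibag (p : 'I_M) : {set V} := [set x | lo x <= p <= hi x].

Lemma interval_td : 0 < M -> (forall x, lo x <= hi x) -> (forall x, lo x < M) ->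
  (forall x y, e x y -> exists p : 'I_M, (lo x <= p <= hi x) && (lo y <= p <= hi y)) ->
  tree_decomposition e prel ibag.
Proof.
move=> M0 lohi loM Hedge; split.
- split.
  + by rewrite card_ord.
  + exact: prel_sym.
  + by move=> p; rewrite /prel; apply/negP => /orP[] /eqP; lia.
  + move=> p q; apply: (@prel_conn predT) => //.
  + exact: prel_acyc.
- by move=> x; exists (Ordinal (loM x)); rewrite inE /= leqnn lohi.
- move=> x y /Hedge [p hp]; by exists p; rewrite !inE.
- move=> x p q; rewrite !inE => hp hq.
  apply: (@prel_conn (fun n => lo x <= n <= hi x)) => //.
  + by move=> a b ab Aa Ab; rewrite /= ab !inE Aa Ab.
  + by move=> a b c /andP[h1 h2] /andP[h3 h4] /andP[h5 h6]; rewrite (leq_trans h3 h1) (leq_trans h2 h6).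
Qed.
End Interval.

Lemma logn2_dvd p i : 0 < p -> (2 ^ i %| p) = (i <= logn 2 p).
Proof. by move=> p0; rewrite pfactor_dvdn. Qed.

Lemma logn2_odd i q : odd q -> logn 2 (2 ^ i * q) = i.
Proof.
move=> oq; have q0 : 0 < q by case: q oq.
rewrite lognM ?expn_gt0 // pfactorK // logn_coprime ?addn0 //.
by rewrite coprime2n.
Qed.

Lemma logn2_even p : 0 < p -> 0 < logn 2 p -> ~~ odd p.
Proof.
move=> p0 l0; have : 2 ^ 1 %| p by rewrite logn2_dvd.
by rewrite expn1 dvdn2.
Qed.

Lemma logn2_oddE p : odd p -> logn 2 p = 0.
Proof. by move=> op; rewrite logn_coprime // coprime2n. Qed.

Section Gk.
Variable k : nat.
Local Notation N := (2 ^ k - 1).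
Local Notation V := (Gk_vertex k).
Local Notation e := (Gk_adj k).

Lemma Gk_sym : symmetric e.
Proof. by case=> [a|i] [b|j] //=; rewrite orbC. Qed.

Lemma card_Gk : 0 < k -> #|V| = 2 ^ k + k - 1.
Proof.
move=> _; rewrite /Gk_vertex card_sum !card_ord.
have : 0 < 2 ^ k by rewrite expn_gt0. lia.
Qed.

Lemma cyc_nb (c : seq V) x : is_cycle e c -> x \in c ->
  exists y z, [/\ y \in c, z \in c, y != z, e x y & e x z].
Proof.
case/and3P=> sc uc cc xc; case: (rot_to xc) => n s E.
have : 2 < size (x :: s) by rewrite -E size_rot.
have : uniq (x :: s) by rewrite -E rot_uniq.
have : cycle e (x :: s) by rewrite -E rot_cycle.
have mem y : y \in s -> y \in c by move=> ys; rewrite -(mem_rot n) E inE ys orbT.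
case: s E mem => [|y s] // E mem.
case/lastP: s E mem => [|r z] // E mem.
move=> /= /andP[exy]; rewrite rcons_path last_rcons => /andP[_ ezx].
rewrite /= mem_rcons inE negb_or => /andP[_ /andP[/andP[yz _] _]] _.
exists y, z; split => //.
- by apply: mem; rewrite inE eqxx.
- by apply: mem; rewrite inE mem_rcons inE eqxx orbT.
- by move: ezx; rewrite Gk_sym.
Qed.

Definition inC (c : seq V) (j : nat) := exists a : 'I_N, a.+1 = j /\ inl a \in c.

Lemma u_nb (a : 'I_N) w : e (inl a) w ->
  (exists b : 'I_N, w = inl b /\ (b.+1 = a \/ a.+1 = b :> nat)) \/
  (exists i : 'I_k, w = inr i /\ logn 2 a.+1 = i).
Proof.
case: w => [b|i] /=.
  by case/orP=> /eqP h; left; exists b; split => //; [right|left].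
by move/eqP=> h; right; exists i.
Qed.

Lemma prop_strong (c : seq V) (a : 'I_N) : is_cycle e c -> inl a \in c ->
  (forall i : 'I_k, logn 2 a.+1 = i -> inr i \notin c) ->
  inC c a /\ inC c a.+2.
Proof.
move=> cy ac hv.
have [y [z [yc zc yz ey ez]]] := cyc_nb cy ac.
case: (u_nb ey) => [[b [yb hb]]|[i [yi hi]]]; last first.
  by move: (hv i hi); rewrite -yi yc.
case: (u_nb ez) => [[b' [ze hb']]|[i [zi hi]]]; last first.
  by move: (hv i hi); rewrite -zi zc.
subst y z.
have bb : (b : nat) != b'.
  by apply: contra yz => /eqP h; apply/eqP; congr inl; apply: val_inj.
rewrite /inC; case: hb => hb; case: hb' => hb'.
- by move: bb; lia.
- by split; [exists b | exists b']; split => //; rewrite -hb'.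
- by split; [exists b' | exists b]; split => //; rewrite -hb.
- by move: bb; lia.
Qed.

Lemma prop_weak (c : seq V) (a : 'I_N) : is_cycle e c -> inl a \in c ->
  inC c a \/ inC c a.+2.
Proof.
move=> cy ac.
have [y [z [yc zc yz ey ez]]] := cyc_nb cy ac.
case: (u_nb ey) => [[b [yb [hb|hb]]]|[i [yi hi]]].
- by left; rewrite /inC; exists b; split; rewrite -?yb -?hb.
- by right; rewrite /inC; exists b; split; rewrite -?yb -?hb.
case: (u_nb ez) => [[b [ze [hb|hb]]]|[i' [zi hi']]].
- by left; rewrite /inC; exists b; split; rewrite -?ze -?hb.
- by right; rewrite /inC; exists b; split; rewrite -?ze -?hb.
move: yz; rewrite yi zi; have -> : i = i' by apply: val_inj; rewrite /= -hi -hi'.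
by rewrite eqxx.
Qed.


Lemma inC_pos c j : inC c j -> 0 < j.
Proof. by case=> a [<- _]. Qed.

Lemma key (c : seq V) i : is_cycle e c ->
  (forall i' : 'I_k, i' < i -> inr i' \notin c) ->
  exists a : 'I_N, inl a \in c /\ logn 2 a.+1 = i.
Proof.
move=> cy hv.
case: (boolP [exists a : 'I_N, (inl a \in c) && (logn 2 a.+1 == i)]).
  by case/existsP=> a /andP[ac /eqP]; exists a.
rewrite negb_exists => /forallP H; exfalso.
have Hn j : inC c j -> logn 2 j != i.
  by case=> a [<- ac]; have := H a; rewrite ac.
have pr j : inC c j -> logn 2 j < i -> inC c j.-1 /\ inC c j.+1.
  case=> a [<- ac] lt; apply: (prop_strong cy ac) => i' hi'.
  by apply: hv; rewrite -hi'.
have [x xc] : exists x, x \in c.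
  by case/and3P: cy; case: (c) => [|x s] //; exists x; rewrite inE eqxx.
have [a0 a0c] : exists a : 'I_N, inl a \in c.
  case: x xc => [a|i0] xc; first by exists a.
  have [y [z [yc _ _ ey _]]] := cyc_nb cy xc.
  by case: y yc ey => [b|?] // yc _; exists b.
have [j0 [j0c lj]] : exists j0, inC c j0 /\ logn 2 j0 < i.
  case: (ltnP (logn 2 a0.+1) i) => h.
    by exists a0.+1; split => //; exists a0.
  have hne := Hn a0.+1 (ex_intro _ a0 (conj erefl a0c)).
  have l1 : 0 < logn 2 a0.+1 by move: h hne; lia.
  have ev := logn2_even (ltn0Sn a0) l1.
  have io : forall j, inC c j -> odd j -> logn 2 j < i.
    move=> j jc oj; have := Hn j jc; rewrite logn2_oddE //; lia.
  case: (prop_weak cy a0c) => jc; [exists a0 | exists a0.+2]; split => //.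
  - by apply: io => //; move: ev; rewrite /=; case: (odd a0).
  - by apply: io => //; move: ev; rewrite /=; case: (odd a0).
have j00 := inC_pos j0c.
set d := 2 ^ i.
have d0 : 0 < d by rewrite expn_gt0.
set q := j0 %/ d.
have ndj : ~~ (d %| j0) by rewrite logn2_dvd // -ltnNge.
have Lj : d * q < j0.
  have := divn_eq j0 d; rewrite -/q mulnC => E.
  have : 0 < j0 %% d by rewrite lt0n -/(dvdn d j0).
  lia.
have jR : j0 < d * q + d.
  have := divn_eq j0 d; rewrite -/q mulnC => E.
  have := ltn_pmod j0 d0. lia.
have nd w : d * q < w -> w < d * q + d -> logn 2 w < i.
  move=> h1 h2; have w0 : 0 < w by lia.
  rewrite ltnNge -logn2_dvd //; apply/negP => /dvdnP[m wm].
  move: h1 h2; rewrite wm -/d (mulnC m) addnC -mulnS !ltn_pmul2l //; lia.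
have hR n : j0 + n <= d * q + d -> inC c (j0 + n).
  elim: n => [|n IH] h; first by rewrite addn0.
  have h' : j0 + n < d * q + d by rewrite addnS in h.
  have [_] := pr (j0 + n) (IH (ltnW h')) (nd _ (ltn_addr _ Lj) h').
  by rewrite addnS.
have hL n : n <= j0 - d * q -> inC c (j0 - n).
  elim: n => [|n IH] h; first by rewrite subn0.
  have h' : d * q < j0 - n by move: h Lj; lia.
  have [] := pr (j0 - n) (IH (ltnW h)) (nd _ h' ltac:(lia)).
  by rewrite subnS.
have cL : inC c (d * q) by have := hL (j0 - d * q) (leqnn _); rewrite subKn ?(ltnW Lj).
have cR : inC c (d * q + d) by have := hR (d * q + d - j0); rewrite subnKC ?(ltnW jR) //; apply.
have q0 : 0 < q by have := inC_pos cL; rewrite muln_gt0 => /andP[].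
case: (boolP (odd q)) => oq.
  by have := Hn _ cL; rewrite logn2_odd // eqxx.
have := Hn _ cR; rewrite addnC -mulnS logn2_odd ?eqxx //=.
Qed.

Lemma Gk_O2 : O2_free e.
Proof.
case=> c1 [c2 [cy1 cy2 dis ind]].
have H i : i <= k -> forall i' : 'I_k, i' < i -> (inr i' \notin c1) && (inr i' \notin c2).
  elim: i => [|i IH] ik i' //.
  rewrite ltnS leq_eqVlt => /orP[/eqP ei|lt]; last exact: IH (ltnW ik) i' lt.
  have hv c : (forall i2 : 'I_k, i2 < i -> (inr i2 \notin c1) && (inr i2 \notin c2)) ->
      c = c1 \/ c = c2 -> forall i2 : 'I_k, i2 < i -> inr i2 \notin c.
    by move=> h [->|->] i2 /h /andP[].
  have [a1 [a1c l1]] := key cy1 (hv c1 (IH (ltnW ik)) (or_introl erefl)).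
  have [a2 [a2c l2]] := key cy2 (hv c2 (IH (ltnW ik)) (or_intror erefl)).
  apply/andP; split; apply/negP => h.
  - by have := ind _ _ h a2c; rewrite /= l2 ei eqxx.
  - by have := ind _ _ a1c h; rewrite /= l1 ei eqxx.
have [a [ac la]] := key cy1 (fun i' lt => proj1 (andP (H k (leqnn k) i' lt))).
have : 2 ^ k %| a.+1 by rewrite logn2_dvd // la.
move/dvdn_leq => /(_ (ltn0Sn _)); have := ltn_ord a.
have : 0 < 2 ^ k by rewrite expn_gt0.
lia.
Qed.

Definition isl (w : V) := if w is inl _ then true else false.

Lemma two_u (g : 'I_3 -> V) :
  (forall a1 a2, a1 != a2 -> isl (g a1) || isl (g a2)) ->
  exists a1 a2 x1 x2, [/\ a1 != a2, g a1 = inl x1 & g a2 = inl x2].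
Proof.
move=> H.
have h01 := H (@Ordinal 3 0 isT) (@Ordinal 3 1 isT) isT.
have h02 := H (@Ordinal 3 0 isT) (@Ordinal 3 2 isT) isT.
have h12 := H (@Ordinal 3 1 isT) (@Ordinal 3 2 isT) isT.
move: h01 h02 h12.
case E0: (g (@Ordinal 3 0 isT)) => [x0|?]; case E1: (g (@Ordinal 3 1 isT)) => [x1|?];
  case E2: (g (@Ordinal 3 2 isT)) => [x2|?] //= _ _ _.
all: first [ by exists (@Ordinal 3 0 isT), (@Ordinal 3 1 isT), x0, x1
           | by exists (@Ordinal 3 0 isT), (@Ordinal 3 2 isT), x0, x2
           | by exists (@Ordinal 3 1 isT), (@Ordinal 3 2 isT), x1, x2 ].
Qed.

Lemma Gk_noK33 : ~ has_K33_subgraph e.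
Proof.
case=> f [finj fe].
have o : 'I_3 := @Ordinal 3 0 isT.
have [a1 [a2 [x1 [x2 [a12 E1 E2]]]]] : exists a1 a2 x1 x2,
    [/\ a1 != a2, f (inl a1) = inl x1 & f (inl a2) = inl x2].
  apply: two_u => a1 a2 ne; apply/negPn/negP => /norP[].
  have := fe a1 o; have := fe a2 o.
  case: (f (inl a1)) (finj (inl a1) (inl a2)) => [?|i1] // fi;
    case: (f (inl a2)) fi => [?|i2] // fi.
  case: (f (inr o)) => [b|?] //= /eqP h2 /eqP h1 _ _.
  have ei : i1 = i2 by apply: val_inj; rewrite /= -h1 -h2.
  by case: (fi (congr1 inr ei)) => ea; rewrite ea eqxx in ne.
have [b1 [b2 [y1 [y2 [b12 F1 F2]]]]] : exists b1 b2 y1 y2,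
    [/\ b1 != b2, f (inr b1) = inl y1 & f (inr b2) = inl y2].
  apply: two_u => b1 b2 ne; apply/negPn/negP => /norP[].
  have := fe o b1; have := fe o b2.
  case: (f (inr b1)) (finj (inr b1) (inr b2)) => [?|i1] // fi;
    case: (f (inr b2)) fi => [?|i2] // fi.
  case: (f (inl o)) => [b|?] //= /eqP h2 /eqP h1 _ _.
  have ei : i1 = i2 by apply: val_inj; rewrite /= -h1 -h2.
  by case: (fi (congr1 inr ei)) => ea; rewrite ea eqxx in ne.
have nx : (x1 : nat) != x2.
  apply: contra a12 => /eqP /val_inj ex; apply/eqP.
  have : f (inl a1) = f (inl a2) by rewrite E1 E2 ex.
  by move/finj => [].
have ny : (y1 : nat) != y2.
  apply: contra b12 => /eqP /val_inj ex; apply/eqP.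
  have : f (inr b1) = f (inr b2) by rewrite F1 F2 ex.
  by move/finj => [].
have := fe a1 b1; have := fe a1 b2; have := fe a2 b1; have := fe a2 b2.
rewrite E1 E2 F1 F2 /= => /orP[] /eqP h1 /orP[] /eqP h2 /orP[] /eqP h3 /orP[] /eqP h4;
  move: nx ny; lia.
Qed.
End Gk.

Section Up.
Variable k : nat.
Hypothesis k0 : 0 < k.
Local Notation N := (2 ^ k - 1).
Local Notation V := (Gk_vertex k).
Local Notation e := (Gk_adj k).
Local Notation M := (2 ^ k.+1 - 2).

Definition glo (x : V) : nat := match x with inl a => (2 * a).-1 | inr i => 2 ^ i.+1 - 2 end.
Definition ghi (x : V) : nat := match x with inl a => 2 * a + 1 | inr i => 2 ^ k.+1 - 2 ^ i.+1 - 2 end.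

Lemma pow_facts (i : 'I_k) : [/\ 2 <= 2 ^ i.+1, 2 ^ i.+1 <= 2 ^ k, 2 ^ k.+1 = 2 * 2 ^ k & 2 <= 2 ^ k].
Proof.
split; last first.
- by rewrite -[2]expn1 leq_pexp2l.
- by rewrite expnS.
- by rewrite leq_pexp2l.
- by rewrite -[2]expn1 leq_pexp2l.
Qed.

Lemma k_facts : 2 ^ k.+1 = 2 * 2 ^ k /\ 2 <= 2 ^ k.
Proof. by split; [rewrite expnS | rewrite -[2]expn1 leq_pexp2l]. Qed.

Lemma vbound j i : 0 < j -> j < 2 ^ k -> logn 2 j = i -> i < k ->
  2 ^ i <= j /\ j + 2 ^ i <= 2 ^ k.
Proof.
move=> j0 jk lj ik.
have : 2 ^ i %| j by rewrite logn2_dvd // lj.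
case/dvdnP=> m jm.
have ek : 2 ^ k = 2 ^ (k - i) * 2 ^ i by rewrite -expnD subnK // ltnW.
have p0 : 0 < 2 ^ i by rewrite expn_gt0.
have m0 : 0 < m by move: j0; rewrite jm muln_gt0 => /andP[].
have : m < 2 ^ (k - i) by move: jk; rewrite jm ek ltn_pmul2r.
rewrite jm ek => mlt; split; first by rewrite leq_pmull.
by rewrite addnC -mulSn leq_pmul2r.
Qed.

Lemma Gk_td : tree_decomposition e (@prel M) (ibag glo ghi).
Proof.
have [kf1 kf2] := k_facts.
apply: interval_td.
- lia.
- case=> [a|i] /=; first lia.
  by have [? ? ? ?] := pow_facts i; lia.
- case=> [a|i] /=; first by have := ltn_ord a; lia.
  by have [? ? ? ?] := pow_facts i; lia.
- have ha (a b : 'I_N) : a.+1 = b -> exists p : 'I_M,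
      (glo (inl a) <= p <= ghi (inl a)) && (glo (inl b) <= p <= ghi (inl b)).
    move=> ab; have lt : 2 * a + 1 < M by have := ltn_ord b; lia.
    by exists (Ordinal lt); rewrite /=; apply/andP; split; apply/andP; split; lia.
  have hv (a : 'I_N) (i : 'I_k) : logn 2 a.+1 = i -> exists p : 'I_M,
      (glo (inl a) <= p <= ghi (inl a)) && (glo (inr i) <= p <= ghi (inr i)).
    move=> li; have := ltn_ord a; have := pow_facts i => -[? ? ? ?] aN.
    have [h1 h2] := vbound (ltn0Sn a) ltac:(lia) li (ltn_ord i).
    have lt : 2 * a < M by lia.
    exists (Ordinal lt); rewrite /=; apply/andP; split; apply/andP; split; try lia.
    + by rewrite (expnS 2 i); lia.
    + by rewrite (expnS 2 i); lia.
  case=> [a|i] [b|j] //=.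
  + case/orP=> /eqP h; first exact: ha.
    by have [p hp] := ha b a h; exists p; rewrite andbC.
  + by move/eqP; apply: hv.
  + by move/eqP => h; have [p hp] := hv b i h; exists p; rewrite andbC.
Qed.

Lemma Gk_bag (p : 'I_M) : #|ibag glo ghi p| <= k.+1.
Proof.
have [kf1 kf2] := k_facts.
pose A := [set a : 'I_N | inl a \in ibag glo ghi p].
pose C := [set i : 'I_k | inr i \in ibag glo ghi p].
have sub : ibag glo ghi p \subset (inl @: A) :|: (inr @: C).
  apply/subsetP => x xB; rewrite inE; case: x xB => [a|i] xB.
    by apply/orP; left; apply/imsetP; exists a => //; rewrite inE.
  by apply/orP; right; apply/imsetP; exists i => //; rewrite inE.
have cB : #|ibag glo ghi p| <= #|A| + #|C|.
  apply: leq_trans (subset_leq_card sub) _.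
  apply: leq_trans (leq_card_setU _ _) _.
  by apply: leq_add; apply: leq_imset_card.
pose g (a : 'I_N) := (2 * a == p.+1).
have ginj : {in A &, injective g}.
  move=> a1 a2; rewrite !inE /= /g => /andP[h1 h2] /andP[h3 h4] e1.
  apply: val_inj => /=; move: e1.
  case: (2 * a1 =P p.+1) => ?; case: (2 * a2 =P p.+1) => ? //= _; lia.
have cA : #|A| <= (if odd p then 2 else 1).
  rewrite -(card_in_imset ginj).
  case: ifP => op.
    by apply: leq_trans (max_card _) _; rewrite card_bool.
  have : g @: A \subset [set false].
    apply/subsetP => b /imsetP[a aA ->]; rewrite inE /g.
    apply/eqP/negbTE/eqP=> h; have := congr1 odd h.
    by rewrite oddM /= op.
  by move/subset_leq_card; rewrite cards1.
have cC : #|C| <= (if odd p then k.-1 else k).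
  case: ifP => op; last by apply: leq_trans (max_card _) _; rewrite card_ord.
  have lt : k.-1 < k by lia.
  have : C \subset [set~ Ordinal lt].
    apply/subsetP => i; rewrite !inE /= => /andP[h1 h2].
    apply/eqP => ei; move: h1 h2; rewrite ei /= prednK // => h1 h2.
    have h := expnS 2 k.-1; rewrite prednK // in h.
    have := odd_double_half p; rewrite op -muln2 /=; lia.
  by move/subset_leq_card; rewrite cardsC1 card_ord.
move: cB cA cC; case: ifP => _; lia.
Qed.
End Up.

Lemma connect_map (T U : finType) (f : T -> U) (R : rel U) p q :
  connect (fun a b => R (f a) (f b)) p q -> connect R (f p) (f q).
Proof.
case/connectP=> s ps ->; elim: s p ps => [|b s IH] p //= /andP[h ps].
by apply: connect_trans (connect1 h) (IH _ ps).
Qed.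

Section Low.
Variable k : nat.
Hypothesis k0 : 0 < k.
Local Notation N := (2 ^ k - 1).
Local Notation V := (Gk_vertex k).
Local Notation e := (Gk_adj k).

Definition loj (j : nat) := if j == 1 then 0 else 2 ^ j.-1.

Definition Xs (j : 'I_k.+1) : {set V} := [set x : V |
  match x with inl a => (loj j < a.+1) && (a.+1 <= 2 ^ j) | inr i => (i : nat) == j end].

Lemma loj_lt j : 0 < j -> loj j < 2 ^ j.
Proof.
move=> j0; rewrite /loj; case: (j =P 1) => [-> //|_].
have := expnS 2 j.-1; rewrite prednK // => ->.
have : 0 < 2 ^ j.-1 by rewrite expn_gt0.
lia.
Qed.

Lemma Xs_conn j : gconn e (Xs j).
Proof.
set R := [rel a b | [&& e a b, a \in Xs j & b \in Xs j]].
have Rsym : symmetric R.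
  by move=> a b; rewrite /R /= Gk_sym; case: (a \in Xs j); case: (b \in Xs j); rewrite ?andbF.
case: (posnP j) => [j0|j0].
  move=> x y; rewrite !inE j0 /loj /=.
  case: x => [a|i]; first by lia.
  case: y => [b|i']; first by lia.
  move=> /eqP h1 /eqP h2; have -> : i = i' by apply: val_inj; rewrite /= h1 h2.
  exact: connect0.
have uu (a b : 'I_N) : inl a \in Xs j -> inl b \in Xs j -> connect R (inl a) (inl b).
  move=> aX bX; apply: (@connect_map _ _ inl R a b).
  apply: (@prel_conn N (fun n => (loj j < n.+1) && (n.+1 <= 2 ^ j))).
  - by move=> p q pq Ap Aq; rewrite /R /= !inE Ap Aq !andbT; exact: pq.
  - move=> a' b' c' /andP[h1 h2] /andP[h3 h4] /andP[h5 h6]; apply/andP; split; lia.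
  - by move: aX; rewrite inE.
  - by move: bX; rewrite inE.
have vu (a : 'I_N) (i : 'I_k) : inl a \in Xs j -> inr i \in Xs j -> connect R (inl a) (inr i).
  move=> aX iX; move: (iX); rewrite inE => /eqP ij.
  have lt : 2 ^ j - 1 < N.
    have : 2 ^ j < 2 ^ k by rewrite ltn_exp2l // -ij.
    have : 0 < 2 ^ j by rewrite expn_gt0. lia.
  have tX : inl (Ordinal lt) \in Xs j.
    rewrite inE /=; have := loj_lt j0; have : 0 < 2 ^ j by rewrite expn_gt0. lia.
  apply: connect_trans (uu a (Ordinal lt) aX tX) (connect1 _).
  rewrite /R /= tX iX !andbT subn1 prednK ?expn_gt0 //.
  by rewrite pfactorK // ij.
move=> x y; case: x => [a|i]; case: y => [b|i'] xX yX.
- exact: uu.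
- exact: vu.
- by rewrite (sym_connect_sym Rsym); apply: vu.
- move: xX yX; rewrite !inE => /eqP h1 /eqP h2.
  have -> : i = i' by apply: val_inj; rewrite /= h1 h2.
  exact: connect0.
Qed.

Lemma Xs_n0 j : Xs j != set0.
Proof.
case: (ltnP j k) => jk.
  by apply/set0Pn; exists (inr (Ordinal jk)); rewrite inE.
have ejk : (j : nat) = k by have := ltn_ord j; lia.
have h := expnS 2 k.-1; rewrite prednK // in h.
have p1 : 0 < 2 ^ k.-1 by rewrite expn_gt0.
have lt : 2 ^ k - 2 < N by lia.
apply/set0Pn; exists (inl (Ordinal lt)); rewrite inE /= ejk /loj.
case: (k =P 1) => [k1|k1]; first by rewrite k1.
have : 1 < 2 ^ k.-1 by rewrite -[1]/(2 ^ 0) ltn_exp2l //; lia.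
lia.
Qed.

Lemma loj_dis j1 j2 n : loj j1 < n <= 2 ^ j1 -> loj j2 < n <= 2 ^ j2 -> j1 < j2 -> False.
Proof.
move=> /andP[h1 h2] /andP[h3 h4] lt.
case: (posnP j1) => [j10|j10].
  by move: h1 h2; rewrite j10 /loj /=; lia.
have : 2 ^ j1 <= 2 ^ j2.-1 by rewrite leq_pexp2l //; lia.
move: h3; rewrite /loj; case: (j2 =P 1) => [e1|_]; first by lia.
lia.
Qed.

Lemma Xs_dis j1 j2 x : x \in Xs j1 -> x \in Xs j2 -> j1 = j2.
Proof.
case: x => [a|i]; rewrite !inE.
  move=> h1 h2; apply: val_inj => /=; case: (ltngtP j1 j2) => // lt; exfalso.
  - exact: loj_dis h1 h2 lt.
  - exact: loj_dis h2 h1 lt.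
by move=> /eqP h1 /eqP h2; apply: val_inj; rewrite /= -h1 -h2.
Qed.

Lemma Xs_touch_lt (j1 j2 : 'I_k.+1) : j1 < j2 ->
  exists x y, [/\ x \in Xs j1, y \in Xs j2 & e x y].
Proof.
move=> lt.
have j2k : (j2 : nat) <= k by have := ltn_ord j2.
have j1k : (j1 : nat) < k by lia.
have p2k : 2 ^ j2 <= 2 ^ k by rewrite leq_pexp2l.
have h2 := expnS 2 j2.-1.
case: (leqP (j1 + 2) j2) => hj.
  set m := j2.-1 - j1.
  have em : 2 ^ j2.-1 = 2 ^ j1 * 2 ^ m by rewrite -expnD subnKC //; lia.
  have pm : 1 < 2 ^ m by rewrite -[1]/(2 ^ 0) ltn_exp2l //; lia.
  have p1 : 0 < 2 ^ j1 by rewrite expn_gt0.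
  rewrite prednK in h2; last by lia.
  have lt1 : 2 ^ j2.-1 + 2 ^ j1 - 1 < N.
    have : 2 * 2 ^ j1 <= 2 ^ j1 * 2 ^ m by rewrite mulnC leq_pmul2l.
    nia.
  exists (inr (Ordinal j1k)), (inl (Ordinal lt1)); split.
  - by rewrite inE.
  - rewrite inE /= /loj; case: ((j2 : nat) =P 1) => [?|_]; first by lia.
    have : 2 * 2 ^ j1 <= 2 ^ j1 * 2 ^ m by rewrite mulnC leq_pmul2l.
    move=> hh; apply/andP; split; nia.
  - rewrite /= subn1 prednK; last by nia.
    rewrite em -{2}(muln1 (2 ^ j1)) -mulnDr logn2_odd //.
    by rewrite oddD oddX; case: (m) pm.
case: (posnP j1) => j10.
  have ej2 : (j2 : nat) = 1 by lia.
  have p1 : 0 < 2 ^ k by rewrite expn_gt0.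
  have p2 : 2 <= 2 ^ k by rewrite -[2]/(2 ^ 1) leq_pexp2l.
  have lt1 : 0 < N by lia.
  exists (inr (Ordinal j1k)), (inl (Ordinal lt1)); split.
  - by rewrite inE.
  - by rewrite inE /= ej2.
  - by rewrite /= j10 logn1.
have ej2 : (j2 : nat) = j1.+1 by lia.
have h1 := expnS 2 j1.
have p1 : 2 <= 2 ^ j1 by rewrite -[2]/(2 ^ 1) leq_pexp2l.
have pk : 2 ^ j1.+1 <= 2 ^ k by rewrite -ej2.
have lta : 2 ^ j1 - 1 < N by lia.
have ltb : 2 ^ j1 < N by lia.
exists (inl (Ordinal lta)), (inl (Ordinal ltb)); split.
- rewrite inE /=; have := loj_lt j10 => ?; apply/andP; split; lia.
- rewrite inE /= ej2 /loj ifF /=; last by apply/eqP; lia.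
  by apply/andP; split; lia.
- by rewrite /= subn1 prednK ?eqxx // expn_gt0.
Qed.

Lemma Gk_lower (I : finType) (t : rel I) (B : I -> {set V}) :
  tree_decomposition e t B -> k <= td_width B.
Proof.
move=> TD.
have := @bramble_width V I e t B TD 'I_k.+1 ord0 Xs Xs_conn Xs_n0 _ Xs_dis.
rewrite card_ord subn1 /=; apply.
move=> j1 j2 ne; case: (ltngtP j1 j2) => lt.
- exact: Xs_touch_lt.
- have [x [y [xX yX exy]]] := Xs_touch_lt lt.
  by exists y, x; rewrite Gk_sym.
- by move: ne; rewrite (val_inj lt) eqxx.
Qed.
End Low.

Theorem mainTheorem3 (k : nat) : 0 < k ->
  [/\ #|Gk_vertex k| = 2 ^ k + k - 1,
      O2_free (Gk_adj k),
      ~ has_K33_subgraph (Gk_adj k) &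
      treewidth_eq (Gk_adj k) k].
Proof.
move=> k0; split.
- exact: card_Gk.
- exact: Gk_O2.
- exact: Gk_noK33.
split; last by move=> I t B; apply: Gk_lower.
exists 'I_(2 ^ k.+1 - 2), (@prel _), (ibag (@glo k) (@ghi k)); split.
  exact: Gk_td.
have td := Gk_td k0.
apply/eqP; rewrite eqn_leq (Gk_lower k0 td) andbT.
rewrite /td_width leq_subLR add1n; apply/bigmax_leqP => p _.
exact: Gk_bag.
Qed.
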